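(* Let $z\ge0$ be an integer. If an undirected multigraph $G$ has a $z$-antler $(C_1,F_1)$ and an antler $(C_2,F_2)$, then $(C_1\setminus(C_2\cup F_2),\,F_1\setminus(C_2\cup F_2))$ is a $z$-antler in $G-(C_2\cup F_2)$.
   Context: A feedback vertex set (FVS) of $G$ is a set $X\subseteq V(G)$ with $G-X$ acyclic (self-loops and pairs of parallel edges count as cycles); $\mathrm{fvs}(G)$ is its minimum size. For disjoint $X,Y$, $e(X,Y)$ is the number of edges between $X$ and $Y$. A feedback vertex cut (FVC) in $G$ is a pair of disjoint sets $C,F\subseteq V(G)$ such that $G[F]$ is a forest and every tree $T$ of $G[F]$ satisfies $e(V(T),V(G)\setminus(C\cup F))\le1$. An antler is a FVC $(C,F)$ with $|C|\le\mathrm{fvs}(G[C\cup F])$. For $C\subseteq V(G)$, a $C$-certificate is a subgraph $H$ of $G$ such that $C$ is a minimum FVS of $H$; it has order $z$ if every component $H'$ of $H$ satisfies $\mathrm{fvs}(H')=|C\cap V(H')|\le z$. A $z$-antler is an antler $(C,F)$ such that $G[C\cup F]$ contains a $C$-certificate of order $z$. *)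

(* Defs.v *)
(* Finite undirected multigraphs (loops and parallel edges
   allowed) over an ambient vertex type V and edge type E; each edge e has an
   (unordered) pair of endpoints given by ends e : V * V. *)
From Stdlib Require Import ClassicalEpsilon.
From mathcomp Require Import all_boot.
Set Implicit Arguments. Unset Strict Implicit. Unset Printing Implicit Defensive.

Definition asb (P : Prop) : bool :=
  if excluded_middle_informative P then true else false.

Section Multigraph.
Variables (V E : finType) (ends : E -> V * V).

Definition graph := ({set V} * {set E})%type.

Definition incident (e : E) (u v : V) : bool :=
  (ends e == (u, v)) || (ends e == (v, u)).

Definition wf_graph (H : graph) : Prop :=
  forall e, e \in H.2 -> (ends e).1 \in H.1 /\ (ends e).2 \in H.1.

Definition subgraph (H G : graph) : Prop :=
  wf_graph H /\ H.1 \subset G.1 /\ H.2 \subset G.2.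

Definition induced (G : graph) (X : {set V}) : graph :=
  (X :&: G.1, [set e in G.2 | ((ends e).1 \in X) && ((ends e).2 \in X)]).

Definition del (G : graph) (X : {set V}) : graph := induced G (G.1 :\: X).

(* a cycle: distinct vertices v_0..v_k and distinct edges e_0..e_k with e_i
   joining v_i and v_(i+1 mod k+1); k = 0 is a self-loop, k = 1 a pair of
   parallel edges *)
Definition has_cycle (H : graph) : Prop :=
  exists k (vs : 'I_k.+1 -> V) (es : 'I_k.+1 -> E),
    injective vs /\ injective es /\
    forall i, [/\ vs i \in H.1, es i \in H.2 & incident (es i) (vs i) (vs (ordS i))].

Definition acyclic (H : graph) : Prop := ~ has_cycle H.

Definition is_fvs (H : graph) (X : {set V}) : Prop :=
  X \subset H.1 /\ acyclic (del H X).

(* fvs(H): minimum size of a feedback vertex set (H.1 itself always is one) *)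
Definition fvs (H : graph) : nat :=
  \big[minn/#|H.1|]_(X : {set V} | asb (is_fvs H X)) #|X|.

Definition ecount (G : graph) (X Y : {set V}) : nat :=
  #|[set e in G.2 | (((ends e).1 \in X) && ((ends e).2 \in Y)) ||
                    (((ends e).1 \in Y) && ((ends e).2 \in X))]|.

Definition adj (H : graph) : rel V :=
  fun u v => [exists e in H.2, incident e u v].

Definition comp_vertices (H : graph) (v : V) : {set V} :=
  [set u in H.1 | connect (adj H) v u].

Definition component (H : graph) (v : V) : graph := induced H (comp_vertices H v).

Definition fvc (G : graph) (C F : {set V}) : Prop :=
  [/\ C \subset G.1, F \subset G.1, [disjoint C & F],
      acyclic (induced G F) &
      forall v, v \in F ->
        ecount G (comp_vertices (induced G F) v) (G.1 :\: (C :|: F)) <= 1].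

Definition antler (G : graph) (C F : {set V}) : Prop :=
  fvc G C F /\ #|C| <= fvs (induced G (C :|: F)).

Definition certificate (G : graph) (C : {set V}) (H : graph) : Prop :=
  subgraph H G /\ is_fvs H C /\ #|C| = fvs H.

Definition certificate_of_order (G : graph) (C : {set V}) (z : nat) (H : graph) : Prop :=
  certificate G C H /\
  forall v, v \in H.1 ->
    fvs (component H v) = #|C :&: (component H v).1| /\
    #|C :&: (component H v).1| <= z.

Definition z_antler (G : graph) (z : nat) (C F : {set V}) : Prop :=
  antler G C F /\ exists H, certificate_of_order (induced G (C :|: F)) C z H.

End Multigraph.

(* Main.v *)
Require Import Defs.
From Stdlib Require Import ClassicalEpsilon.
From mathcomp Require Import all_boot zify.
Set Implicit Arguments. Unset Strict Implicit. Unset Printing Implicit Defensive.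

Section Aux.
Variables (V E : finType) (ends : E -> V * V).

Lemma iter_ordS k (i0 : 'I_k.+1) n : val (iter n (@ordS _) i0) = (i0 + n) %% k.+1.
Proof.
elim: n => [|n IH] /=; first by rewrite addn0 modn_small.
by rewrite IH /= -addn1 modnDml -addnA addn1.
Qed.

Lemma ordS_all k (P : 'I_k.+1 -> bool) i0 :
  (forall i, P i -> P (ordS i)) -> P i0 -> forall j, P j.
Proof.
move=> HS P0 j.
have Hn : forall n, P (iter n (@ordS _) i0) by elim=> //= n IH; apply: HS.
have -> : j = iter ((k.+1 - i0) + j) (@ordS _) i0.
  apply: val_inj; rewrite iter_ordS addnA subnKC; last by apply: ltnW; apply: ltn_ord.
  by rewrite addnC modnDr modn_small.
exact: Hn.
Qed.

Lemma transitions k (b : 'I_k.+1 -> bool) i0 j0 : b i0 -> ~~ b j0 ->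
  (exists i, b i && ~~ b (ordS i)) /\ (exists j, ~~ b j && b (ordS j)).
Proof.
move=> bi bj; split.
  case: (pickP (fun i => b i && ~~ b (ordS i))) => [i Hi|H]; first by exists i.
  suff: b j0 by rewrite (negbTE bj).
  apply: (ordS_all (P:=b) _ bi) => i bi'.
  by move: (H i); rewrite bi' /= => /negbFE.
case: (pickP (fun i => ~~ b i && b (ordS i))) => [i Hi|H]; first by exists i.
suff: ~~ b i0 by rewrite bi.
apply: (ordS_all (P:=fun i => ~~ b i) _ bj) => i bi'.
by move: (H i); rewrite bi' /= => ->.
Qed.

Lemma incident_sym e u v : incident ends e u v -> incident ends e v u.
Proof. by rewrite /incident orbC. Qed.

Lemma incident_in e u v (A : {set V}) : incident ends e u v -> u \in A -> v \in A ->
  ((ends e).1 \in A) && ((ends e).2 \in A).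
Proof. by case/orP => /eqP -> /= -> ->. Qed.

Lemma incident_mem e u v (A B : {set V}) : incident ends e u v -> u \in A -> v \in B ->
  (((ends e).1 \in A) && ((ends e).2 \in B)) || (((ends e).1 \in B) && ((ends e).2 \in A)).
Proof. by case/orP => /eqP -> /= -> ->; rewrite ?orbT. Qed.

Definition cyc k (vs : 'I_k.+1 -> V) (es : 'I_k.+1 -> E) :=
  injective vs /\ injective es /\ forall i, incident ends (es i) (vs i) (vs (ordS i)).

Lemma has_cycleP (H : graph V E) : has_cycle ends H <->
  exists k vs es, @cyc k vs es /\ forall i, vs i \in H.1 /\ es i \in H.2.
Proof.
split.
  case=> k [vs [es [Iv [Ie Hc]]]]; exists k, vs, es; split.
    by split=> //; split=> // i; case: (Hc i).
  by move=> i; case: (Hc i).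
case=> k [vs [es [[Iv [Ie Hi]] Hc]]]; exists k, vs, es; split=> //; split=> // i.
by case: (Hc i) => ??; split.
Qed.

Lemma has_cycle_induced (G : graph V E) X : has_cycle ends (induced ends G X) <->
  exists k vs es, @cyc k vs es /\ forall i, [/\ vs i \in X, vs i \in G.1 & es i \in G.2].
Proof.
rewrite has_cycleP; split.
  case=> k [vs [es [Hc Hm]]]; exists k, vs, es; split=> // i.
  by case: (Hm i); rewrite !inE => /andP [-> ->] /andP [-> _].
case=> k [vs [es [Hc Hm]]]; exists k, vs, es; split=> // i.
case: (Hm i) => h1 h2 h3; rewrite !inE h1 h2 h3 /=; split=> //.
case: Hc => _ [_ Hi]; apply: (incident_in (Hi i)) => //.
by case: (Hm (ordS i)).
Qed.

Lemma bigmin_le (I : eqType) (r : seq I) (P : pred I) (F : I -> nat) x0 X :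
  X \in r -> P X -> \big[minn/x0]_(i <- r | P i) F i <= F X.
Proof.
elim: r => // y r IH; rewrite inE big_cons => /orP [/eqP <- -> | Xr PX].
  exact: geq_minl.
case: (P y); last exact: IH.
by apply: leq_trans (geq_minr _ _) (IH Xr PX).
Qed.

Lemma fvs_le (H : graph V E) X : is_fvs ends H X -> fvs ends H <= #|X|.
Proof.
move=> HX; rewrite /fvs; apply: bigmin_le; first exact: mem_index_enum.
by rewrite /asb; case: excluded_middle_informative.
Qed.

Lemma fvs_ex (H : graph V E) : exists X, is_fvs ends H X /\ #|X| = fvs ends H.
Proof.
rewrite /fvs; apply: (big_ind (fun x => exists X, is_fvs ends H X /\ #|X| = x)).
- exists H.1; split=> //; split=> //.
  move/has_cycleP => [k [vs [es [_ Hm]]]]; case: (Hm ord0); rewrite !inE.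
  by case: (vs ord0 \in H.1).
- move=> x y [X [HX <-]] [Y [HY <-]]; rewrite /minn; case: ltnP => _.
  + by exists X. + by exists Y.
- move=> X; rewrite /asb; case: excluded_middle_informative => // HX _.
  by exists X.
Qed.


Lemma lemmaA C F k (vs : 'I_k.+1 -> V) es :
  fvc ends ((setT, setT) : graph V E) C F -> @cyc k vs es ->
  (forall i, vs i \notin C) -> forall i, vs i \notin F.
Proof.
case=> _ _ _ acF bnd Hc HnC i0; apply/negP => Fi0.
set G : graph V E := (setT, setT).
set T := comp_vertices ends (induced ends G F) (vs i0).
have TF : forall u, u \in T -> u \in F by move=> u; rewrite !inE => /andP [/andP [] ].
have Ti0 : vs i0 \in T by rewrite !inE Fi0 connect0.
have bnd' := bnd _ Fi0.
case: Hc => [Iv [Ie Hi]].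
have [allT | [j0 nj0]] : (forall i, vs i \in T) \/ exists j, vs j \notin T.
  case: (pickP (fun j => vs j \notin T)) => [j Hj|H]; first by right; exists j.
  by left => i; move: (H i) => /negbFE.
  apply: acF; apply/has_cycle_induced; exists k, vs, es; split; first by [].
  by move=> i; rewrite !inE TF.
have bdry : forall e x y, incident ends e x y -> x \in T -> y \notin T -> y \notin C ->
    e \in [set e in G.2 | (((ends e).1 \in T) && ((ends e).2 \in (G.1 :\: (C :|: F)))) ||
                    (((ends e).1 \in (G.1 :\: (C :|: F))) && ((ends e).2 \in T))].
  move=> e x y Hxy xT yT yC; rewrite inE /=.
  rewrite in_setT /=.
  apply: (incident_mem (B := [set: V] :\: (C :|: F)) Hxy xT); rewrite !inE (negbTE yC) /=.
  rewrite andbT; apply/negP => yF; move/negP: yT; apply.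
  rewrite !inE yF /=; apply: connect_trans (_ : connect _ x y).
    by move: xT; rewrite !inE => /andP [].
  apply: connect1; apply/existsP; exists e; rewrite Hxy andbT !inE.
  by apply: (incident_in Hxy) => //; apply: TF.
have [[i /andP [bi nbi]] [j /andP [nbj bj]]] := transitions (b := fun i => vs i \in T) Ti0 nj0.
have e1 := bdry _ _ _ (Hi i) bi nbi (HnC _).
have e2 := bdry _ _ _ (incident_sym (Hi j)) bj nbj (HnC _).
have ne : es i != es j by apply/negP => /eqP /Ie eij; move: bi; rewrite eij (negbTE nbj).
move: bnd'; rewrite /ecount -/T; apply/negP; rewrite -ltnNge.
apply: leq_trans (subset_leq_card (_ : [set es i; es j] \subset _)).
  by rewrite cards2 ne.
by apply/subsetP => x /set2P [] ->; [exact: e1 | exact: e2].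
Qed.

Lemma fvs_restrict (H M : graph V E) Y : H.1 \subset M.1 -> H.2 \subset M.2 ->
  is_fvs ends M Y -> is_fvs ends H (Y :&: H.1).
Proof.
move=> s1 s2 [sY acY]; split; first exact: subsetIr.
move/has_cycle_induced => [k [vs [es [Hc Hm]]]]; apply: acY.
apply/has_cycle_induced; exists k, vs, es; split=> // i.
case: (Hm i); rewrite !inE => /andP [nY h1] h1' h2.
rewrite (subsetP s1 _ h1) (subsetP s2 _ h2) andbT; split=> //.
by move: nY; rewrite h1 andbT.
Qed.

Lemma comp_fvs (J : graph V E) D v : is_fvs ends J D -> #|D| <= fvs ends J ->
  #|D :&: (component ends J v).1| <= fvs ends (component ends J v).
Proof.
move=> [sD acD] leD.
set K := component ends J v.
have [Y [[sY acY] cY]] := fvs_ex K.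
set Z := Y :|: (D :\: K.1).
have fZ : is_fvs ends J Z.
  split.
    rewrite subUset (subset_trans sY) ?subsetIr //.
    exact: subset_trans (subsetDl _ _) sD.
  move/has_cycle_induced => [k [vs [es [Hc Hm]]]].
  have inJ : forall i, vs i \in J.1 by move=> i; case: (Hm i).
  case: (pickP (fun i => vs i \in comp_vertices ends J v)) => [i0 Hi0 | none].
    have allc : forall i, vs i \in comp_vertices ends J v.
      apply: (ordS_all (P := fun i => vs i \in comp_vertices ends J v) _ Hi0) => i.
      rewrite !inE => /andP [_ ci]; rewrite inJ /=.
      apply: connect_trans ci (connect1 _); apply/existsP; exists (es i).
      by case: (Hm i) => _ _ ->; case: Hc => _ [_ ->].
    apply: acY; apply/has_cycle_induced; exists k, vs, es; split=> // i.
    have Ki : vs i \in K.1 by rewrite /K /component /induced /= inE allc inJ.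
    case: (Hm i) => hZ _ ei.
    split.
    - rewrite inE Ki andbT; move: hZ; rewrite inE => /andP [hZ _].
      by move: hZ; rewrite inE negb_or => /andP [].
    - exact: Ki.
    - rewrite inE ei /=; case: Hc => _ [_ Hi]; apply: (incident_in (Hi i)) => //.
  apply: acD; apply/has_cycle_induced; exists k, vs, es; split=> // i.
  case: (Hm i); rewrite !inE => /andP [nZ _] h1 h2; split=> //.
  rewrite h1 andbT; move: nZ; rewrite negb_or => /andP [_].
  by move: (none i); rewrite /= inE h1 /= => ->.
have := fvs_le fZ.
have := cardsID K.1 D.
have : #|Z| <= #|Y| + #|D :\: K.1| by rewrite cardsU leq_subr.
lia.
Qed.

Lemma connect_mono (H1 H2 : graph V E) x y : H1.2 \subset H2.2 ->
  connect (adj ends H1) x y -> connect (adj ends H2) x y.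
Proof.
move=> s; apply: connect_sub => u w /existsP [e /andP [eH inc]].
by apply: connect1; apply/existsP; exists e; rewrite inc (subsetP s _ eH).
Qed.

Lemma ecount_mono (G1 G2 : graph V E) (X1 X2 Y1 Y2 : {set V}) :
  G1.2 \subset G2.2 -> X1 \subset X2 -> Y1 \subset Y2 ->
  ecount ends G1 X1 Y1 <= ecount ends G2 X2 Y2.
Proof.
move=> sG sX sY; apply: subset_leq_card; apply/subsetP => e; rewrite !inE.
case/andP => /(subsetP sG) -> /orP [] /andP [h1 h2] /=.
  by rewrite (subsetP sX _ h1) (subsetP sY _ h2).
by rewrite (subsetP sX _ h2) (subsetP sY _ h1) orbT.
Qed.

End Aux.

Theorem lemma10 (V E : finType) (ends : E -> V * V) (z : nat)
    (C1 F1 C2 F2 : {set V}) :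
  let G : graph V E := (setT, setT) in
  z_antler ends G z C1 F1 ->
  antler ends G C2 F2 ->
  z_antler ends (del ends G (C2 :|: F2)) z
    (C1 :\: (C2 :|: F2)) (F1 :\: (C2 :|: F2)).
Proof.
move=> G [[fvc1 ant1] [H [[[wfH [sH1 sH2]] [[sC1H acH] eqH]] ord]]] [fvc2 ant2].
have HCF : forall x, x \in H.1 -> x \in C1 :|: F1.
  by move=> x /(subsetP sH1); rewrite inE => /andP [].
set W := C2 :|: F2.
set H' := del ends H W.
have H'1 : forall x, (x \in H'.1) = (x \in H.1) && (x \notin W).
  by move=> x; rewrite /H' /del /induced /= !inE; case: (x \in H.1); rewrite ?andbT ?andbF.
have H'2 : forall e, (e \in H'.2) = [&& e \in H.2, (ends e).1 \in H.1 :\: W & (ends e).2 \in H.1 :\: W].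
  by move=> e; rewrite /H' /del /induced /= inE.
have mainI : #|C1 :\: W| <= fvs ends H'.
  have [S [[sS acS] cS]] := fvs_ex ends H'.
  have f1 : is_fvs ends H ((S :|: C2) :&: H.1).
    split; first exact: subsetIr.
    move/has_cycle_induced => [k [vs [es [Hc Hm]]]].
    have nSC : forall i, vs i \notin S /\ vs i \notin C2.
      move=> i; case: (Hm i) => + h1 _; rewrite !inE h1 !andbT negb_or.
      by case/andP.
    have nF2 := lemmaA fvc2 Hc (fun i => (nSC i).2).
    have inH' : forall i, vs i \in H'.1.
      by move=> i; rewrite H'1; case: (Hm i) => _ -> _; rewrite /W inE negb_or (nSC i).2 nF2.
    apply: acS; apply/has_cycle_induced; exists k, vs, es; split => // i.
    split.
    - by rewrite inE inH' (nSC i).1.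
    - exact: inH'.
    - case: (Hm i) => _ _ ei; rewrite H'2 ei /=.
      case: Hc => _ [_ Hi]; apply: (incident_in (Hi i)).
      + by rewrite inE andbC -H'1.
      + by rewrite inE andbC -H'1.
  have f2 : is_fvs ends (induced ends G W) ((C1 :&: W) :|: (C2 :\: (C1 :|: F1))).
    split.
      apply/subsetP => x; rewrite /= !inE andbT.
      by case/orP => /andP [] // _ ->.
    move/has_cycle_induced => [k [vs [es [Hc Hm]]]].
    have hm : forall i, [&& ~~
      ((vs i \in C1) && ((vs i \in C2) || (vs i \in F2))
       || ~~ ((vs i \in C1) || (vs i \in F1)) && (vs i \in C2)),
      (vs i \in C2) || (vs i \in F2) & true].
      by move=> i; case: (Hm i) => h _ _; move: h; rewrite !inE.
    have nC1 : forall i, vs i \notin C1.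
      move=> i; case/and3P: (hm i) => h1 h2 _; apply/negP => c1.
      by move: h1; rewrite c1 h2.
    have nF1 := lemmaA fvc1 Hc nC1.
    have nC2 : forall i, vs i \notin C2.
      move=> i; case/and3P: (hm i) => h1 h2 _.
      by move: h1; rewrite (negbTE (nC1 i)) (negbTE (nF1 i)).
    have nF2 := lemmaA fvc2 Hc nC2.
    case/and3P: (hm ord0) => _ + _.
    by rewrite (negbTE (nC2 _)) (negbTE (nF2 _)).
  have := fvs_le f1; have := fvs_le f2.
  have c1 : #|(S :|: C2) :&: H.1| <= #|S| + #|C2 :&: (C1 :|: F1)|.
    apply: leq_trans (_ : #|S :|: (C2 :&: (C1 :|: F1))| <= _); last first.
      by rewrite cardsU leq_subr.
    apply: subset_leq_card; apply/subsetP => x; rewrite inE => /andP [].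
    rewrite !inE => /orP [-> //| xC2 /HCF]; rewrite inE xC2 /= => ->.
    by rewrite orbT.
  have c2 : #|(C1 :&: W) :|: (C2 :\: (C1 :|: F1))| <= #|C1 :&: W| + #|C2 :\: (C1 :|: F1)|.
    by rewrite cardsU leq_subr.
  have c3 := cardsID (C1 :|: F1) C2.
  have c4 := cardsID W C1.
  move: ant2; rewrite -/W => ant2.
  lia.
have H'1' : forall x, (x \in H'.1) = (x \in H.1 :\: W).
  by move=> x; rewrite H'1 in_setD andbC.
set C1' := C1 :\: W. set F1' := F1 :\: W.
set G' := del ends G W.
have G'1 : forall x, (x \in G'.1) = (x \notin W).
  by move=> x; rewrite /G' /del /induced /= !inE !andbT.
have G'2 : forall e, (e \in G'.2) = ((ends e).1 \notin W) && ((ends e).2 \notin W).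
  by move=> e; rewrite /G' /del /induced /= !inE !andbT.
set M := induced ends G' (C1' :|: F1').
have inCF : forall x, x \in H.1 :\: W -> x \in C1' :|: F1'.
  move=> x; rewrite in_setD => /andP [xW /HCF h].
  by rewrite in_setU !in_setD xW /= -in_setU.
have s1 : H'.1 \subset M.1.
  apply/subsetP => x; rewrite H'1' => xH; rewrite /M /induced /= inE inCF //= G'1.
  by move: xH; rewrite inE => /andP [].
have s2 : H'.2 \subset M.2.
  apply/subsetP => e; rewrite H'2 => /and3P [eH h1 h2].
  rewrite /M /induced /= inE G'2 !inCF //.
  by move: h1 h2; rewrite !inE => /andP [-> _] /andP [-> _].
have fC1' : is_fvs ends H' C1'.
  split.
    apply/subsetP => x; rewrite H'1' !inE => /andP [xW xC].
    by rewrite xW (subsetP sC1H _ xC).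
  move/has_cycle_induced => [k [vs [es [Hc Hm]]]]; apply: acH.
  apply/has_cycle_induced; exists k, vs, es; split => // i.
  case: (Hm i) => h1 h2 h3.
  move: h2; rewrite H'1 => /andP [vH vW].
  move: h3; rewrite H'2 => /and3P [eH _ _].
  split=> //; move: h1; rewrite !inE => /andP [+ _].
  by rewrite vH andbT; move: vW; rewrite in_setU => /negbTE ->.
split.
  split.
    case: fvc1 => _ _ d ac bnd.
    split.
    - by apply/subsetP => x; rewrite G'1 inE => /andP [].
    - by apply/subsetP => x; rewrite G'1 inE => /andP [].
    - exact: disjointWl (subsetDl C1 W) (disjointWr (subsetDl F1 W) d).
    - move/has_cycle_induced => [k [vs [es [Hc Hm]]]]; apply: ac.
      apply/has_cycle_induced; exists k, vs, es; split => // i.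
      case: (Hm i) => h1 _ _; rewrite !in_setT; split=> //.
      by move: h1; rewrite inE => /andP [].
    - move=> v; rewrite inE => /andP [vW vF].
      apply: leq_trans (bnd v vF); apply: ecount_mono.
      + exact: subsetT.
      + apply/subsetP => x; rewrite /comp_vertices inE => /andP [xi c]; rewrite inE.
        apply/andP; split.
          by move: xi; rewrite /= !inE => /andP [/andP [_ ->] _].
        apply: connect_mono c; apply/subsetP => e; rewrite /= !inE.
        by case/andP => _ /andP [/andP [_ ->] /andP [_ ->]].
      + apply/subsetP => x; rewrite in_setD G'1 /= !inE.
        by case: (x \in C1); case: (x \in F1); case: (x \in C2); case: (x \in F2).
  have [Y [fY cY]] := fvs_ex ends M.
  have := fvs_le (fvs_restrict s1 s2 fY).
  have := subset_leq_card (subsetIl Y H'.1); rewrite -/M; have := mainI; rewrite -/C1'.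
  lia.
exists H'; split.
  split; first split.
  - move=> e; rewrite H'2 => /and3P [_ h1 h2]; rewrite !H'1'; split=> //.
  - by split.
  split=> //; apply/eqP; rewrite eqn_leq (fvs_le fC1') andbT; exact: mainI.
move=> v vH'.
have vH : v \in H.1 by move: vH'; rewrite H'1 => /andP [].
have [_ oz] := ord v vH.
split.
  apply/eqP; rewrite eqn_leq comp_fvs // andbT.
  apply: fvs_le; apply: fvs_restrict fC1'; first exact: subsetIr.
  by apply/subsetP => e; rewrite inE => /andP [].
apply: leq_trans oz; apply: subset_leq_card; apply/subsetP => x.
rewrite inE => /andP [xC xK]; rewrite inE; apply/andP; split.
  by move: xC; rewrite inE => /andP [].
move: xK; rewrite inE => /andP [xc xH'].
move: xc; rewrite inE => /andP [_ c].
have xH : x \in H.1 by move: xH'; rewrite H'1 => /andP [].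
rewrite inE xH andbT inE xH /=.
by apply: connect_mono c; apply/subsetP => e; rewrite H'2 => /and3P [].
Qed.
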